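(* Let $x\in X(l_1,\dots,l_n,l_\infty)$ and let $i\ne j$ be indices in $\{1,\dots,n\}$ with $l_i=l_j$. Then there is $g\in J_n$ such that $gx$ is the diagram obtained from $x$ by interchanging the labels $z_i$ and $z_j$ (i.e. exchanging the positions of $z_i$ and $z_j$) while keeping the unlabelled arc configuration (the numbers of arcs between each pair of positions) unchanged.
   Context: Cactus group: $J_n$ is the group generated by $s_{p,q}$, $1\le p<q\le n$, subject to the relations $s_{p,q}^2=e$; $s_{p,q}s_{p',q'}=s_{p',q'}s_{p,q}$ if $[p,q]$ and $[p',q']$ are disjoint; $s_{p,q}s_{p',q'}s_{p,q}=s_{p+q-q',p+q-p'}$ if $p\le p'<q'\le q$. Arc diagrams: fix nonnegative integers $l_1,\dots,l_n,l_\infty$. On the boundary circle of a closed disc place $n+1$ marked positions: position $0$ (occupied by the distinguished point $z_\infty$) and positions $1,\dots,n$ following it in clockwise order. An arc diagram consists of a bijective assignment of the labels $z_1,\dots,z_n$ to the positions $1,\dots,n$, together with a finite collection of simple arcs in the disc, pairwise disjoint except possibly at endpoints, each joining two distinct marked points, such that the point labelled $z_j$ is an endpoint of exactly $l_j$ arcs for each $j\in\{1,\dots,n,\infty\}$ ($l_j$ is the valence of $z_j$). Parallel arcs are allowed. Diagrams are considered up to isotopy fixing the marked points; equivalently a diagram is determined by the labelling and the number of arcs joining each pair of marked points. $X(l_1,\dots,l_n,l_\infty)$ is the set of all such diagrams. Action: for $1\le p<q\le n$, $s_{p,q}x$ is obtained by choosing a chord $\ell$ separating positions $p,\dots,q$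 from the other marked points, isotoping arcs to cross $\ell$ at most once, reflecting the cut-off region containing positions $p,\dots,q$ by the reflection reversing $\ell$ (so the label at position $p+t$ moves to position $q-t$ and crossing points on $\ell$ are reversed in order), keeping the rest unchanged, and reconnecting arcs at $\ell$. Words act right to left; this is an action of $J_n$. *)

(* Defs.v *)
From mathcomp Require Import all_boot.
Set Implicit Arguments. Unset Strict Implicit. Unset Printing Implicit Defensive.

(* Marked positions on the circle: 'I_n.+1, position 0 carries z_oo,
   positions 1..n follow clockwise.  Labels are also 'I_n.+1: label 0 is
   z_oo, label j (1<=j<=n) is z_j.  A diagram is a pair (lab, m):
   - lab a  = index of the label at position a;
   - m (a,b) = number of arcs joining positions a and b, used only for a < b
     (required to be 0 otherwise). *)
Definition diagram (n : nat) :=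
  ({ffun 'I_n.+1 -> 'I_n.+1} * {ffun 'I_n.+1 * 'I_n.+1 -> nat})%type.

Definition dlab n (x : diagram n) := x.1.
Definition dmult n (x : diagram n) := x.2.

Definition valence n (x : diagram n) (a : 'I_n.+1) : nat :=
  \sum_(b : 'I_n.+1) (dmult x (a, b) + dmult x (b, a)).

(* membership in X(l_1,...,l_n,l_oo); l ord0 is l_oo, l j is l_j *)
Definition inX n (l : 'I_n.+1 -> nat) (x : diagram n) : Prop :=
  [/\ dlab x ord0 = ord0,
      injective (dlab x),
      (forall a b : 'I_n.+1, ~~ (nat_of_ord a < b)%N -> dmult x (a, b) = 0),
      (* arcs pairwise disjoint except at endpoints: no two crossing chords *)
      (forall a b c d : 'I_n.+1, (a < c)%N -> (c < b)%N -> (b < d)%N ->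
          dmult x (a, b) = 0 \/ dmult x (c, d) = 0)
    & (forall a : 'I_n.+1, valence x a = l (dlab x a))].

Section Cactus.
Variables (n p q : nat).
Local Notation P := 'I_n.+1.

Definition inside (a : P) : bool := (p <= a <= q)%N.
Definition refl (a : P) : P := if inside a then inord (p + q - a) else a.

Variable x : diagram n.
Local Notation m := (dmult x).

(* number of arcs from inner point a to the outside, resp. from outer
   point o to the inside, i.e. crossing the chord l *)
Definition cin (a : P) : nat :=
  \sum_(o : P | ~~ inside o) (m (a, o) + m (o, a)).
Definition cout (o : P) : nat :=
  \sum_(a : P | inside a) (m (a, o) + m (o, a)).

(* inner endpoints of the crossing arcs after reflection, listed in the
   order of the crossing points along l from the end near p *)
Definition new_inner : seq P :=
  flatten [seq nseq (cin (refl a)) a | a <- enum P & inside a].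

(* outer endpoints of the crossing arcs, in the order of the crossing points
   along l from the end near p: p-1, p-2, ..., 0, n, n-1, ..., q+1 *)
Definition outer_order : seq P :=
  [seq o <- rev (enum P) | (nat_of_ord o < p)%N] ++ [seq o <- rev (enum P) | (q < nat_of_ord o)%N].
Definition outer_ends : seq P :=
  flatten [seq nseq (cout o) o | o <- outer_order].

Definition new_cross : seq (P * P) := zip new_inner outer_ends.

Definition s_lab : {ffun P -> P} := [ffun a => dlab x (refl a)].

Definition s_mult : {ffun P * P -> nat} :=
  [ffun ab : P * P =>
    let: (a, b) := ab in
    if (a < b)%N then
      if inside a && inside b then m (refl b, refl a)
      else if ~~ inside a && ~~ inside b then m (a, b)
      else count (pred1 (if inside a then (a, b) else (b, a))) new_cross
    else 0].

Definition s_act : diagram n := (s_lab, s_mult).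
End Cactus.

(* A word in the generators s_{p,q} of J_n; it acts right to left.  Every
   element of J_n is represented by such a word. *)
Definition valid_gen n (g : nat * nat) : bool := [&& 0 < g.1, g.1 < g.2 & g.2 <= n]%N.

Definition act_word n (w : seq (nat * nat)) (x : diagram n) : diagram n :=
  foldr (fun g y => s_act g.1 g.2 y) x w.

Definition swap_labels n (i j : 'I_n.+1) (x : diagram n) : diagram n :=
  ([ffun a => let c := dlab x a in
              if c == i then j else if c == j then i else c], dmult x).

(* Main.v *)
Require Import Defs.
From mathcomp Require Import all_boot zify.
Set Implicit Arguments. Unset Strict Implicit. Unset Printing Implicit Defensive.


Definition blocks (T : Type) (f : T -> nat) (s : seq T) :=
  flatten [seq nseq (f a) a | a <- s].

Lemma blocks_cons (T : Type) (f : T -> nat) a s :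
  blocks f (a :: s) = nseq (f a) a ++ blocks f s.
Proof. by []. Qed.

Lemma mem_blocks (T : eqType) (f : T -> nat) s x :
  (x \in blocks f s) = (x \in s) && (0 < f x).
Proof.
elim: s => [|a s IH] //=; rewrite blocks_cons mem_cat mem_nseq IH in_cons.
case: (eqVneq x a) => [->|ne] /=; last by rewrite andbF.
by case: (0 < f a); rewrite /= ?andbT ?andbF.
Qed.

Lemma size_blocks (T : Type) (f : T -> nat) s :
  size (blocks f s) = \sum_(a <- s) f a.
Proof. by elim: s => [|a s IH]; rewrite ?big_nil ?big_cons // size_cat size_nseq IH. Qed.

Lemma count_blocks (T : eqType) (f : T -> nat) s c :
  count (pred1 c) (blocks f s) = f c * count_mem c s.
Proof.
elim: s => [|a s IH]; first by rewrite /= muln0.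
rewrite blocks_cons count_cat count_nseq IH /= mulnDr.
by case: (eqVneq a c) => [->|ne] /=; rewrite ?eqxx ?mul1n ?muln1 ?mul0n ?muln0 // (negbTE ne).
Qed.

Lemma mem_zip2 (S T : eqType) (s : seq S) (t : seq T) x y :
  (x, y) \in zip s t -> x \in s /\ y \in t.
Proof.
elim: s t => [|a s IH] [|b t] //= ; rewrite in_cons.
case/orP => [/eqP [-> ->]|/IH [h1 h2]]; rewrite !in_cons ?eqxx //.
by rewrite h1 h2 !orbT.
Qed.

Lemma sum_pos (T : eqType) (s : seq T) (F : T -> nat) :
  0 < \sum_(a <- s) F a -> exists2 a, a \in s & 0 < F a.
Proof.
elim: s => [|a s IH]; rewrite ?big_nil ?big_cons // addn_gt0.
case/orP => [h|/IH [b hb hF]]; first by exists a; rewrite ?in_cons ?eqxx.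
by exists b; rewrite // in_cons hb orbT.
Qed.

Lemma sum_zero (T : eqType) (s : seq T) (F : T -> nat) a :
  \sum_(b <- s) F b = 0 -> a \in s -> F a = 0.
Proof.
move=> h ha; move: h; rewrite (big_rem a) //=; by case: (F a).
Qed.


Section Abstract.
Variables (T1 T2 : eqType) (ltu : rel T1) (ltv : rel T2).
Hypotheses (ltu_tr : transitive ltu) (ltv_tr : transitive ltv)
  (ltu_irr : irreflexive ltu) (ltv_irr : irreflexive ltv).

Lemma zip_blocks (us : seq T1) (vs : seq T2) (M : T1 -> T2 -> nat) :
  sorted ltu us -> sorted ltv vs ->
  (forall u u' v v', ltu u u' -> ltv v v' -> M u v' = 0 \/ M u' v = 0) ->
  forall u v, u \in us -> v \in vs ->
  count (pred1 (u,v)) (zip (blocks (fun u => \sum_(v <- vs) M u v) us)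
                           (blocks (fun v => \sum_(u <- us) M u v) vs)) = M u v.
Proof.
move=> su sv mon.
have [N] := ubnP (size us + size vs + \sum_(u <- us) \sum_(v <- vs) M u v).
elim: N us vs M su sv mon => // N IH us vs M su sv mon.
case: us su => [|u0 us'] // su.
case: vs sv => [|v0 vs'] // sv hN u v hu hv.
have hu0 : forall u, u \in us' -> ltu u0 u by apply/allP/order_path_min.
have hv0 : forall v, v \in vs' -> ltv v0 v by apply/allP/order_path_min.
have su' : sorted ltu us' := path_sorted su.
have sv' : sorted ltv vs' := path_sorted sv.
have nu0 : forall u, u \in us' -> u != u0.
  by move=> w /hu0 h; apply/eqP => e; rewrite e ltu_irr in h.
have nv0 : forall v, v \in vs' -> v != v0.
  by move=> w /hv0 h; apply/eqP => e; rewrite e ltv_irr in h.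
case: (posnP (\sum_(v <- v0 :: vs') M u0 v)) => [r00|r0p].
  have Mu0 : forall v, v \in v0 :: vs' -> M u0 v = 0.
    by move=> w hw; exact: sum_zero r00 hw.
  have E1 : blocks (fun u => \sum_(v <- v0 :: vs') M u v) (u0 :: us') =
            blocks (fun u => \sum_(v <- v0 :: vs') M u v) us'.
    by rewrite blocks_cons r00.
  have E2 : blocks (fun v => \sum_(u <- u0 :: us') M u v) (v0 :: vs') =
            blocks (fun v => \sum_(u <- us') M u v) (v0::vs').
    rewrite /blocks; congr flatten; apply/eq_in_map => w hw.
    by rewrite big_cons Mu0.
  rewrite E1 E2.
  have IH' := IH us' (v0::vs') M su' sv mon.
  move: hN; rewrite big_cons r00 /= => hN.
  case: (eqVneq u u0) => [->|neu].
    rewrite Mu0 //; apply/count_memPn/negP => /mem_zip2 [].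
    by rewrite mem_blocks => /andP [/nu0]; rewrite eqxx.
  apply: IH'; [by rewrite /=; lia | by move: hu; rewrite in_cons (negbTE neu) | by []].
case: (posnP (\sum_(u <- u0 :: us') M u v0)) => [c00|c0p].
  have Mv0 : forall u, u \in u0 :: us' -> M u v0 = 0.
    by move=> w hw; exact: (@sum_zero _ _ (fun u => M u v0)) c00 hw.
  have E1 : blocks (fun v => \sum_(u <- u0 :: us') M u v) (v0 :: vs') =
            blocks (fun v => \sum_(u <- u0 :: us') M u v) vs'.
    by rewrite blocks_cons c00.
  have E2 : blocks (fun u => \sum_(v <- v0 :: vs') M u v) (u0 :: us') =
            blocks (fun u => \sum_(v <- vs') M u v) (u0::us').
    rewrite /blocks; congr flatten; apply/eq_in_map => w hw.
    by rewrite big_cons Mv0.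
  rewrite E1 E2.
  have IH' := IH (u0::us') vs' M su sv' mon.
  have hN' : \sum_(u <- u0 :: us') \sum_(v <- vs') M u v <=
             \sum_(u <- u0 :: us') \sum_(v <- v0 :: vs') M u v.
    by apply: leq_sum => w _; rewrite big_cons leq_addl.
  case: (eqVneq v v0) => [->|nev].
    rewrite Mv0 //; apply/count_memPn/negP => /mem_zip2 [_].
    by rewrite mem_blocks => /andP [/nv0]; rewrite eqxx.
  apply: IH'; [by move: hN hN' => /=; lia | by [] | by move: hv; rewrite in_cons (negbTE nev)].
have M00 : 0 < M u0 v0.
  rewrite lt0n; apply/negP => /eqP M0.
  have [w hw Mw] := sum_pos r0p.
  have [w' hw' Mw'] := sum_pos c0p.
  move: hw hw' Mw Mw'; rewrite !in_cons.
  case: (eqVneq w v0) => [->|nw] /=; first by rewrite M0.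
  case: (eqVneq w' u0) => [->|nw'] /= ; first by rewrite M0.
  move=> hw hw' Mw Mw'.
  case: (mon u0 w' v0 w (hu0 _ hw') (hv0 _ hw)) => h.
    by rewrite h in Mw.
  by rewrite h in Mw'.
pose M' u v := M u v - ((u == u0) && (v == v0)).
have rowE : forall u, \sum_(v <- v0 :: vs') M u v =
    ((u == u0) : nat) + \sum_(v <- v0 :: vs') M' u v.
  move=> w; rewrite !big_cons.
  have -> : \sum_(v <- vs') M' w v = \sum_(v <- vs') M w v.
    by apply: eq_big_seq => z hz; rewrite /M' (negbTE (nv0 _ hz)) andbF subn0.
  rewrite /M' eqxx andbT; case: (eqVneq w u0) => [->|_] /=; last by rewrite subn0.
  by rewrite addnA (subnKC M00).
have colE : forall v, \sum_(u <- u0 :: us') M u v =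
    ((v == v0) : nat) + \sum_(u <- u0 :: us') M' u v.
  move=> w; rewrite !big_cons.
  have -> : \sum_(u <- us') M' u w = \sum_(u <- us') M u w.
    by apply: eq_big_seq => z hz; rewrite /M' (negbTE (nu0 _ hz)) subn0.
  rewrite /M' eqxx /=; case: (eqVneq w v0) => [->|_] /=; last by rewrite subn0.
  by rewrite addnA (subnKC M00).
have EU : blocks (fun u => \sum_(v <- v0 :: vs') M u v) (u0 :: us') =
     u0 :: blocks (fun u => \sum_(v <- v0 :: vs') M' u v) (u0 :: us').
  rewrite !blocks_cons rowE eqxx add1n /=; congr (u0 :: (_ ++ _)).
  rewrite /blocks; congr flatten; apply/eq_in_map => w hw.
  by rewrite rowE (negbTE (nu0 _ hw)).
have EV : blocks (fun v => \sum_(u <- u0 :: us') M u v) (v0 :: vs') =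
     v0 :: blocks (fun v => \sum_(u <- u0 :: us') M' u v) (v0 :: vs').
  rewrite !blocks_cons colE eqxx add1n /=; congr (v0 :: (_ ++ _)).
  rewrite /blocks; congr flatten; apply/eq_in_map => w hw.
  by rewrite colE (negbTE (nv0 _ hw)).
rewrite EU EV /=.
have S : \sum_(u <- u0::us') \sum_(v <- v0::vs') M u v =
         (\sum_(u <- u0::us') \sum_(v <- v0::vs') M' u v).+1.
  rewrite [in LHS]big_cons [in RHS]big_cons rowE eqxx.
  have -> : \sum_(u <- us') \sum_(v <- v0::vs') M u v =
            \sum_(u <- us') \sum_(v <- v0::vs') M' u v.
    by apply: eq_big_seq => z hz; rewrite rowE (negbTE (nu0 _ hz)).
  by rewrite add1n.
have mon' : forall u u' v v', ltu u u' -> ltv v v' -> M' u v' = 0 \/ M' u' v = 0.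
  move=> a a' b b' h1 h2; case: (mon a a' b b' h1 h2) => h.
    by left; rewrite /M' h.
  by right; rewrite /M' h.
rewrite (IH (u0::us') (v0::vs') M' su sv mon') //; last first.
  by move: hN; rewrite S /=; lia.
rewrite /M' xpair_eqE.
case: (eqVneq u u0) => [->|]; case: (eqVneq v v0) => [->|] //=; rewrite ?eqxx /=.
- by rewrite add1n subn1 prednK.
- by rewrite subn0.
- by rewrite subn0.
- by rewrite subn0.
Qed.

End Abstract.

Lemma sorted_blocks (T : eqType) (lt : rel T) (f : T -> nat) s :
  transitive lt -> sorted lt s ->
  sorted (fun x y => (x == y) || lt x y) (blocks f s).
Proof.
move=> tr; have tr' : transitive (fun x y : T => (x == y) || lt x y).
  move=> y x z /orP [/eqP->|h1] // /orP [/eqP<-|h2]; rewrite ?h1 ?orbT //.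
  by rewrite (tr _ _ _ h1 h2) orbT.
rewrite !sorted_pairwise //.
elim: s => [|a s IH] //= /andP [ha hs].
rewrite blocks_cons pairwise_cat IH // andbT.
apply/andP; split.
  apply/allrelP => x y; rewrite mem_nseq mem_blocks => /andP [_ /eqP ->] /andP [hy _].
  by rewrite (allP ha _ hy) orbT.
by elim: (f a) => //= k ->; rewrite andbT all_nseq eqxx orbT.
Qed.

Lemma zip_mono (S T : eqType) (le1 : rel S) (le2 : rel T) s t a b a' b' :
  transitive le1 -> reflexive le1 -> transitive le2 -> reflexive le2 ->
  sorted le1 s -> sorted le2 t -> size s = size t ->
  (a,b) \in zip s t -> (a',b') \in zip s t -> ~~ le1 a' a -> le2 b b'.
Proof.
move=> t1 r1 t2 r2 ss st hsz h h' hn.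
have sz : size (zip s t) = size s by rewrite size_zip hsz minnn.
case/(nthP (a,b)): h => k hk ek.
case/(nthP (a,b)): h' => k' hk' ek'.
rewrite (nth_zip a b) // in ek; rewrite (nth_zip a b) // in ek'; case: ek => ea eb; case: ek' => ea' eb'.
rewrite sz in hk hk'.
case: (leqP k' k) => hkk.
  have := @sorted_leq_nth _ _ t1 r1 a s ss k' k; rewrite !inE => /(_ hk' hk hkk).
  by rewrite ea ea' (negbTE hn).
rewrite -eb -eb'; apply: (@sorted_leq_nth _ _ t2 r2 b t st k k'); rewrite ?inE -?hsz //.
exact: ltnW.
Qed.

Lemma eqlt_tr (T : eqType) (lt : rel T) : transitive lt ->
  transitive (fun x y => (x == y) || lt x y).
Proof.
move=> tr y x z /orP [/eqP->|h1] // /orP [/eqP<-|h2]; rewrite ?h1 ?orbT //.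
by rewrite (tr _ _ _ h1 h2) orbT.
Qed.

Lemma eqlt_refl (T : eqType) (lt : rel T) : reflexive (fun x y => (x == y) || lt x y).
Proof. by move=> x; rewrite eqxx. Qed.


Definition LZ n (m : {ffun 'I_n.+1 * 'I_n.+1 -> nat}) :=
  forall a b : 'I_n.+1, ~~ (nat_of_ord a < b)%N -> m (a, b) = 0.
Definition NCR n (m : {ffun 'I_n.+1 * 'I_n.+1 -> nat}) :=
  forall a b c d : 'I_n.+1, (a < c)%N -> (c < b)%N -> (b < d)%N ->
    m (a, b) = 0 \/ m (c, d) = 0.
Definition MM n (x : diagram n) (a b : 'I_n.+1) := dmult x (a, b) + dmult x (b, a).

Lemma MMsym n (x : diagram n) a b : MM x a b = MM x b a.
Proof. by rewrite /MM addnC. Qed.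

Lemma NCM n (x : diagram n) : LZ (dmult x) -> NCR (dmult x) ->
  forall a b c d : 'I_n.+1, (a < c)%N -> (c < b)%N -> (b < d)%N ->
    0 < MM x a b -> 0 < MM x c d -> False.
Proof.
move=> lz nc a b c d h1 h2 h3; rewrite /MM (lz b a) ?(lz d c); try lia.
by rewrite !addn0; case: (nc a b c d h1 h2 h3) => ->.
Qed.

Section Region.
Variables (n p q : nat).
Hypotheses (hp : 0 < p) (hpq : p < q) (hqn : q <= n).
Local Notation P := 'I_n.+1.
Local Notation ins := (@inside n p q).
Local Notation rf := (@refl n p q).

Lemma insideE (a : P) : ins a = (p <= a <= q). Proof. by []. Qed.

Lemma refl_val (a : P) : ins a -> nat_of_ord (rf a) = p + q - a.
Proof. by move=> h; rewrite /refl h /= inordK //; move: h; rewrite insideE; lia. Qed.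

Lemma refl_out (a : P) : ~~ ins a -> rf a = a.
Proof. by rewrite /refl => /negbTE ->. Qed.

Lemma refl_inside (a : P) : ins (rf a) = ins a.
Proof.
case h: (ins a); last by rewrite refl_out ?h.
by rewrite insideE refl_val //; move: h; rewrite insideE; lia.
Qed.

Lemma reflK : involutive rf.
Proof.
move=> a; case h: (ins a); last by rewrite !refl_out ?h.
apply: val_inj => /=; rewrite refl_val ?refl_inside // refl_val //.
by move: h; rewrite insideE; lia.
Qed.

Lemma refl_inj : injective rf. Proof. exact: inv_inj reflK. Qed.

Definition rank (o : P) : nat := if (o < p)%N then p - 1 - o else p + n - o.
Definition ltU (a b : P) := [&& ins a, ins b & (a < b)%N].
Definition ltV (a b : P) := [&& ~~ ins a, ~~ ins b & rank a < rank b].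
Definition us := [seq a <- enum P | ins a].

Lemma ltU_tr : transitive ltU.
Proof. by move=> b a c /and3P [h1 h2 h3] /and3P [h4 h5 h6]; rewrite /ltU h1 h5 /=; lia. Qed.
Lemma ltV_tr : transitive ltV.
Proof. by move=> b a c /and3P [h1 h2 h3] /and3P [h4 h5 h6]; rewrite /ltV h1 h5 /=; lia. Qed.
Lemma ltU_irr : irreflexive ltU.
Proof. by move=> a; rewrite /ltU ltnn !andbF. Qed.
Lemma ltV_irr : irreflexive ltV.
Proof. by move=> a; rewrite /ltV ltnn !andbF. Qed.

Lemma mem_us a : (a \in us) = ins a.
Proof. by rewrite mem_filter mem_enum andbT. Qed.

Lemma sorted_us : sorted ltU us.
Proof.
have s0 : sorted (relpre val ltn) (enum P) by rewrite -sorted_map val_enum_ord iota_ltn_sorted.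
have s1 := sorted_filter (fun b a c => @ltn_trans (val b) (val a) (val c)) ins s0.
apply: (sub_in_sorted (P := ins)) s1; last by apply/allP => a; rewrite mem_filter => /andP [].
by move=> a b ha hb h; apply/and3P; split.

Qed.

Lemma mem_outer o : (o \in outer_order n p q) = ~~ ins o.
Proof.
rewrite mem_cat !mem_filter mem_rev mem_enum !andbT insideE negb_and -!ltnNge.
by [].
Qed.

Lemma sorted_outer : sorted ltV (outer_order n p q).
Proof.
have s0 : sorted (relpre val ltn) (enum P) by rewrite -sorted_map val_enum_ord iota_ltn_sorted.
have s1 : sorted (fun a b : P => (b < a)%N) (rev (enum P)) by rewrite rev_sorted.
have trg : transitive (fun a b : P => (b < a)%N).
  by move=> b a c h1 h2; exact: ltn_trans h2 h1.
rewrite sorted_pairwise; last exact: ltV_tr.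
rewrite pairwise_cat; apply/and3P; split.
- apply/allrelP => a b; rewrite !mem_filter => /andP [ha _] /andP [hb _].
  rewrite /ltV !insideE /rank ha; have -> : (b < p)%N = false by lia.
  by move: (ltn_ord b); lia.
- rewrite -sorted_pairwise; last exact: ltV_tr.
  apply: (sub_in_sorted (P := fun a : P => (a < p)%N)) (sorted_filter trg _ s1); last first.
    by apply/allP => a; rewrite mem_filter => /andP [].
  move=> a b ha hb h; have {}ha : (a < p)%N := ha; have {}hb : (b < p)%N := hb.
  by rewrite /ltV !insideE /rank ha hb /=; move: h => /=; lia.
- rewrite -sorted_pairwise; last exact: ltV_tr.
  apply: (sub_in_sorted (P := fun a : P => (q < a)%N)) (sorted_filter trg _ s1); last first.
    by apply/allP => a; rewrite mem_filter => /andP [].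
  move=> a b ha hb h; have {}ha : (q < a)%N := ha; have {}hb : (q < b)%N := hb.
  rewrite /ltV !insideE /rank.
  have -> : (a < p)%N = false by lia.
  have -> : (b < p)%N = false by lia.
  move: (ltn_ord a) (ltn_ord b) h => /=; lia.
Qed.

Lemma uniq_outer : uniq (outer_order n p q).
Proof. apply: (sorted_uniq ltV_tr ltV_irr); exact: sorted_outer. Qed.
Lemma uniq_us : uniq us.
Proof. apply: (sorted_uniq ltU_tr ltU_irr); exact: sorted_us. Qed.

Lemma sum_out (F : P -> nat) : \sum_(o | ~~ ins o) F o = \sum_(o <- outer_order n p q) F o.
Proof.
rewrite -big_filter; apply: perm_big; apply: uniq_perm.
- exact: filter_uniq (index_enum_uniq _).
- exact: uniq_outer.
- by move=> o; rewrite mem_filter mem_index_enum andbT mem_outer.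
Qed.

Lemma sum_in (F : P -> nat) : \sum_(a | ins a) F a = \sum_(a <- us) F a.
Proof.
rewrite -big_filter; apply: perm_big; apply: uniq_perm.
- exact: filter_uniq (index_enum_uniq _).
- exact: uniq_us.
- by move=> o; rewrite mem_filter mem_index_enum andbT mem_us.
Qed.


Lemma cinE (x : diagram n) u : cin p q x u = \sum_(o <- outer_order n p q) MM x u o.
Proof. by rewrite -sum_out. Qed.
Lemma coutE (x : diagram n) o : cout p q x o = \sum_(a <- us) MM x a o.
Proof. by rewrite -sum_in. Qed.

Definition monot (x : diagram n) := forall u u' v v', ltU u u' -> ltV v v' ->
  MM x u v' = 0 \/ MM x u' v = 0.

Lemma Klem (x : diagram n) : monot x -> forall u o, ins u -> ~~ ins o ->
  count (pred1 (u,o)) (zip (blocks (cin p q x) us) (outer_ends p q x)) = MM x u o.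
Proof.
move=> mon u o hu ho.
have E1 : blocks (cin p q x) us =
    blocks (fun u => \sum_(v <- outer_order n p q) MM x u v) us.
  by rewrite /blocks; congr flatten; apply/eq_map => a; rewrite cinE.
have E2 : outer_ends p q x =
    blocks (fun v => \sum_(a <- us) MM x a v) (outer_order n p q).
  by rewrite /outer_ends /blocks; congr flatten; apply/eq_map => a; rewrite coutE.
rewrite E1 E2; apply: (zip_blocks ltU_tr ltV_tr ltU_irr ltV_irr sorted_us sorted_outer mon).
  by rewrite mem_us.
by rewrite mem_outer.
Qed.

Lemma monot_x (x : diagram n) : LZ (dmult x) -> NCR (dmult x) -> monot x.
Proof.
move=> lz nc u u' v v' /and3P [hu hu' uu] /and3P [hv hv' vv].
move: hu hu' hv hv' vv; rewrite !insideE /rank => hu hu' hv hv' vv.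
have F := NCM lz nc.
case: (posnP (MM x u v')) => [->|p1]; first by left.
case: (posnP (MM x u' v)) => [->|p2]; first by right.
exfalso; move: vv (ltn_ord v) (ltn_ord v').
case: (ltnP v p) => h1; case: (ltnP v' p) => h2 vv o1 o2.
- by apply: (F v' u v u'); [lia|lia|lia|rewrite MMsym|rewrite MMsym].
- by apply: (F v u' u v'); [lia|lia|lia|rewrite MMsym|].
- lia.
- by apply: (F u v' u' v); lia.
Qed.

Lemma s_multE (x : diagram n) (a b : P) : dmult (s_act p q x) (a,b) =
  if (a < b)%N then (if ins a && ins b then dmult x (rf b, rf a)
   else if ~~ ins a && ~~ ins b then dmult x (a,b)
   else count (pred1 (if ins a then (a,b) else (b,a))) (new_cross p q x)) else 0.
Proof. by rewrite /dmult /= ffunE. Qed.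

Lemma s_labE (x : diagram n) (a : P) : dlab (s_act p q x) a = dlab x (rf a).
Proof. by rewrite /dlab /s_act [(_, _).1]/= /s_lab ffunE. Qed.

Lemma Mcross (x : diagram n) u o : ins u -> ~~ ins o ->
  MM (s_act p q x) u o = count (pred1 (u,o)) (new_cross p q x).
Proof.
move=> hu ho; rewrite /MM !s_multE hu (negbTE ho) andbF andbT.
case: (ltngtP u o) => h; rewrite ?addn0 ?add0n //.
by move: hu ho; rewrite !insideE h => ->.
Qed.

Lemma Mout (x : diagram n) a b : LZ (dmult x) -> ~~ ins a -> ~~ ins b ->
  MM (s_act p q x) a b = MM x a b.
Proof.
move=> lz ha hb; rewrite /MM !s_multE (negbTE ha) (negbTE hb) /=.
case: (ltngtP a b) => h.
- by rewrite (lz b a) ?addn0 //; lia.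
- by rewrite (lz a b) ?addn0 ?add0n //; lia.
- have e : a = b by apply: val_inj.
  by rewrite e (lz b b) ?ltnn.
Qed.

Lemma Minside (x : diagram n) a b : LZ (dmult x) -> ins a -> ins b ->
  MM (s_act p q x) a b = MM x (rf a) (rf b).
Proof.
move=> lz ha hb; rewrite /MM !s_multE ha hb /=.
have ra := refl_val ha; have rb := refl_val hb.
move: ha hb; rewrite !insideE => ha hb.
case: (ltngtP a b) => h.
- by rewrite (lz (rf a) (rf b)) ?addn0 ?add0n //; rewrite ra rb; lia.
- by rewrite (lz (rf b) (rf a)) ?addn0 //; rewrite ra rb; lia.
- have e : a = b by apply: val_inj.
  by rewrite e (lz (rf b) (rf b)) ?ltnn.
Qed.

Lemma sum_count1 (z : seq (P*P)) (c : P) (Q : pred P) :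
  \sum_(o | Q o) count (pred1 (c,o)) z = count (fun e => (e.1 == c) && Q e.2) z.
Proof.
elim: z => [|[e1 e2] z IH]; first by rewrite big1.
rewrite /= -IH big_split /=; congr (_ + _).
case: (boolP (Q e2)) => hq.
  rewrite (bigD1 e2) //= xpair_eqE eqxx andbT big1 ?addn0 ?andbT //.
  by move=> o /andP [_ ne]; rewrite xpair_eqE (eq_sym e2) (negbTE ne) andbF.
rewrite andbF big1 // => o ho; rewrite xpair_eqE.
by case: (eqVneq e2 o) => [e|]; rewrite ?andbF //; rewrite e ho in hq.
Qed.

Lemma sum_count2 (z : seq (P*P)) (c : P) (Q : pred P) :
  \sum_(o | Q o) count (pred1 (o,c)) z = count (fun e => Q e.1 && (e.2 == c)) z.
Proof.
elim: z => [|[e1 e2] z IH]; first by rewrite big1.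
rewrite /= -IH big_split /=; congr (_ + _).
case: (boolP (Q e1)) => hq.
  rewrite (bigD1 e1) //= xpair_eqE eqxx big1 ?addn0 //.
  by move=> o /andP [_ ne]; rewrite xpair_eqE (eq_sym e1) (negbTE ne).
rewrite big1 // => o ho; rewrite xpair_eqE.
by case: (eqVneq e1 o) => [e|]; rewrite //; rewrite e ho in hq.
Qed.

Lemma size_cross (x : diagram n) : size (new_inner p q x) = size (outer_ends p q x).
Proof.
change (size (blocks (fun a => cin p q x (rf a)) us) =
        size (blocks (cout p q x) (outer_order n p q))).
rewrite !size_blocks -sum_in -sum_out.
rewrite [LHS](reindex_inj refl_inj) /=.
under eq_bigl do rewrite refl_inside.
under eq_bigr do rewrite reflK.
by rewrite /cin /cout exchange_big.
Qed.

Lemma cin_act (x : diagram n) c : ins c -> cin p q (s_act p q x) c = cin p q x (rf c).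
Proof.
move=> hc.
have -> : cin p q (s_act p q x) c =
    \sum_(o | ~~ ins o) count (pred1 (c,o)) (new_cross p q x).
  by apply: eq_bigr => o ho; rewrite -Mcross.
rewrite sum_count1.
rewrite (@eq_in_count _ _ (fun e => e.1 == c)); last first.
  move=> [e1 e2] /mem_zip2 [_].
  change (e2 \in blocks (cout p q x) (outer_order n p q) -> (e1 == c) && ~~ ins e2 = (e1 == c)).
  by rewrite mem_blocks mem_outer => /andP [-> _]; rewrite andbT.
have -> : count (fun e => e.1 == c) (new_cross p q x) =
    count (pred1 c) (unzip1 (new_cross p q x)) by rewrite count_map.
rewrite /new_cross unzip1_zip ?size_cross //.
change (count (pred1 c) (blocks (fun a => cin p q x (rf a)) us) = cin p q x (rf c)).
by rewrite count_blocks count_uniq_mem ?uniq_us // mem_us hc muln1.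
Qed.

Lemma cout_act (x : diagram n) o : ~~ ins o -> cout p q (s_act p q x) o = cout p q x o.
Proof.
move=> ho.
have -> : cout p q (s_act p q x) o =
    \sum_(a | ins a) count (pred1 (a,o)) (new_cross p q x).
  by apply: eq_bigr => a ha; rewrite -Mcross.
rewrite sum_count2.
rewrite (@eq_in_count _ _ (fun e => e.2 == o)); last first.
  move=> [e1 e2] /mem_zip2 [+ _].
  change (e1 \in blocks (fun a => cin p q x (rf a)) us -> ins e1 && (e2 == o) = (e2 == o)).
  by rewrite mem_blocks mem_us => /andP [-> _].
have -> : count (fun e => e.2 == o) (new_cross p q x) =
    count (pred1 o) (unzip2 (new_cross p q x)) by rewrite count_map.
rewrite /new_cross unzip2_zip ?size_cross //.
change (count (pred1 o) (blocks (cout p q x) (outer_order n p q)) = cout p q x o).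
by rewrite count_blocks count_uniq_mem ?uniq_outer // mem_outer ho muln1.
Qed.

Lemma valence_act (x : diagram n) c : LZ (dmult x) ->
  valence (s_act p q x) c = valence x (rf c).
Proof.
move=> lz; rewrite /valence (bigID ins) [in RHS](bigID ins) /=.
case: (boolP (ins c)) => hc.
  congr (_ + _); last exact: cin_act.
  rewrite [RHS](reindex_inj refl_inj); apply: eq_big => [b|b hb].
    by rewrite refl_inside.
  exact: Minside.
rewrite refl_out //; congr (_ + _).
  transitivity (cout p q (s_act p q x) c).
    by apply: eq_bigr => b _; rewrite addnC.
  by rewrite cout_act //; apply: eq_bigr => b _; rewrite addnC.
by apply: eq_bigr => b hb; exact: Mout.
Qed.

Lemma cross_count (x : diagram n) (c d : P) : LZ (dmult x) -> monot x -> (c < d)%N ->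
  ins c != ins d ->
  count (pred1 (if ins c then (c,d) else (d,c)))
    (zip (blocks (cin p q x) us) (outer_ends p q x)) = dmult x (c,d).
Proof.
move=> lz mon cd; case: (boolP (ins c)) => hc hd.
  have hd' : ~~ ins d by move: hd; case: (ins d).
  by rewrite Klem // /MM (lz d c) ?addn0 //; lia.
have hd' : ins d by move: hd; case: (ins d).
by rewrite Klem // /MM (lz d c) ?add0n //; lia.
Qed.

Lemma act_invol (x : diagram n) : LZ (dmult x) -> NCR (dmult x) ->
  s_act p q (s_act p q x) = x.
Proof.
move=> lz nc; have mon := monot_x lz nc.
rewrite [RHS]surjective_pairing /s_act; congr (_, _).
  by apply/ffunP => a; rewrite ffunE -/(dlab _) s_labE reflK.
apply/ffunP => [[a b]].
change (dmult (s_act p q (s_act p q x)) (a,b) = dmult x (a,b)).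
rewrite s_multE; case: (ltnP a b) => ab; last by rewrite lz // -leqNgt.
case: (boolP (ins a)) => ha; case: (boolP (ins b)) => hb /=.
- rewrite s_multE !refl_inside ha hb !reflK /=.
  have -> : (rf b < rf a)%N by rewrite !refl_val //; move: ha hb ab; rewrite !insideE; lia.
  by [].
- have NI : new_inner p q (s_act p q x) = blocks (cin p q x) us.
    rewrite /new_inner; change (blocks (fun a => cin p q (s_act p q x) (rf a)) us = blocks (cin p q x) us).
    rewrite /blocks; congr flatten; apply/eq_in_map => c; rewrite mem_us => hc.
    by rewrite cin_act ?refl_inside // reflK.
  have OE : outer_ends p q (s_act p q x) = outer_ends p q x.
    change (blocks (cout p q (s_act p q x)) (outer_order n p q) = blocks (cout p q x) (outer_order n p q)).
    rewrite /blocks; congr flatten; apply/eq_in_map => c; rewrite mem_outer => hc.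
    by rewrite cout_act.
  rewrite /new_cross NI OE -(cross_count lz mon ab) ?ha //.
- have NI : new_inner p q (s_act p q x) = blocks (cin p q x) us.
    rewrite /new_inner; change (blocks (fun a => cin p q (s_act p q x) (rf a)) us = blocks (cin p q x) us).
    rewrite /blocks; congr flatten; apply/eq_in_map => c; rewrite mem_us => hc.
    by rewrite cin_act ?refl_inside // reflK.
  have OE : outer_ends p q (s_act p q x) = outer_ends p q x.
    change (blocks (cout p q (s_act p q x)) (outer_order n p q) = blocks (cout p q x) (outer_order n p q)).
    rewrite /blocks; congr flatten; apply/eq_in_map => c; rewrite mem_outer => hc.
    by rewrite cout_act.
  rewrite /new_cross NI OE -(cross_count lz mon ab) ?(negbTE ha) //.
  by move: ha hb; case: (ins a); case: (ins b).
- by rewrite s_multE (negbTE ha) (negbTE hb) ab.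
Qed.



Lemma insAB (a b c : P) : q = p.+1 -> nat_of_ord a = p -> nat_of_ord b = q ->
  ins c = (c == a) || (c == b).
Proof.
move=> hq ha hb; rewrite insideE -!val_eqE /= ha hb hq.
case: (ltngtP c p) => h; rewrite ?andbF ?andbT /=.
- by apply/esym/negbTE; lia.
- by case: (ltngtP c p.+1) => h'; rewrite ?orbT ?orbF //; apply/negbTE; lia.
- by rewrite h leqnSn.
Qed.

Lemma sum_ins2 (a b : P) (F : P -> nat) : q = p.+1 -> nat_of_ord a = p -> nat_of_ord b = q ->
  \sum_(d | ins d) F d = F a + F b.
Proof.
move=> hq ha hb.
have ab : b != a by rewrite -val_eqE /= ha hb hq; lia.
rewrite (bigD1 a) /=; last by rewrite (insAB _ hq ha hb) eqxx.
rewrite (bigD1 b) /=; last by rewrite (insAB _ hq ha hb) eqxx orbT ab.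
rewrite big1 ?addn0 // => d /andP [/andP [hd na] nb].
by move: hd; rewrite (insAB _ hq ha hb) (negbTE na) (negbTE nb).
Qed.

Lemma cin_adj (x : diagram n) (a b : P) : q = p.+1 -> nat_of_ord a = p -> nat_of_ord b = q ->
  LZ (dmult x) -> valence x a = valence x b -> cin p q x a = cin p q x b.
Proof.
move=> hq ha hb lz.
have V : forall c, valence x c = MM x c a + MM x c b + cin p q x c.
  by move=> c; rewrite /valence (bigID ins) /= (sum_ins2 _ hq ha hb).
have maa : MM x a a = 0 by rewrite /MM lz ?ltnn.
have mbb : MM x b b = 0 by rewrite /MM lz ?ltnn.
by rewrite !V maa mbb (MMsym x b a); lia.
Qed.

Lemma adj_swap (x : diagram n) (a b i j : P) : q = p.+1 ->
  nat_of_ord a = p -> nat_of_ord b = q ->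
  LZ (dmult x) -> monot x -> injective (dlab x) -> dlab x a = i -> dlab x b = j ->
  i != j -> cin p q x a = cin p q x b -> s_act p q x = swap_labels i j x.
Proof.
move=> hq ha hb lz mon inj la lb ij ce.
have IAB := insAB _ hq ha hb.
have ra : rf a = b.
  by apply: val_inj; rewrite /= refl_val ?IAB ?eqxx // ha hb; lia.
have rb : rf b = a by rewrite -ra reflK.
rewrite /swap_labels [LHS]surjective_pairing; congr (_, _).
  apply/ffunP => c; rewrite !ffunE.
  case: (eqVneq c a) => [->|nca]; first by rewrite ra la lb eqxx.
  case: (eqVneq c b) => [->|ncb]; first by rewrite rb la lb eq_sym (negbTE ij) eqxx.
  have hc : ~~ ins c by rewrite IAB (negbTE nca) (negbTE ncb).
  rewrite refl_out //.
  have -> : (dlab x c == i) = false by rewrite -la; apply/negbTE; apply: contra nca => /eqP /inj ->.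
  have -> : (dlab x c == j) = false by rewrite -lb; apply/negbTE; apply: contra ncb => /eqP /inj ->.
  by [].
apply/ffunP => [[c d]].
change (dmult (s_act p q x) (c,d) = dmult x (c,d)).
rewrite s_multE; case: (ltnP c d) => cd; last by rewrite lz // -leqNgt.
case: (boolP (ins c)) => hc; case: (boolP (ins d)) => hd /=.
- move: hc hd; rewrite !IAB.
  case/orP => /eqP ec; case/orP => /eqP ed; subst c d; rewrite ?ra ?rb //;
    by move: cd ha hb; rewrite ?ltnn //; lia.
- have NI : new_inner p q x = blocks (cin p q x) us.
    change (blocks (fun a => cin p q x (rf a)) us = blocks (cin p q x) us).
    rewrite /blocks; congr flatten; apply/eq_in_map => e; rewrite mem_us IAB.
    by case/orP => /eqP ->; rewrite ?ra ?rb ce.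
  by rewrite /new_cross NI -(cross_count lz mon cd) ?hc // (negbTE hd).
- have NI : new_inner p q x = blocks (cin p q x) us.
    change (blocks (fun a => cin p q x (rf a)) us = blocks (cin p q x) us).
    rewrite /blocks; congr flatten; apply/eq_in_map => e; rewrite mem_us IAB.
    by case/orP => /eqP ->; rewrite ?ra ?rb ce.
  by rewrite /new_cross NI -(cross_count lz mon cd) ?(negbTE hc) // hd.
- by [].
Qed.

End Region.


Section Y.
Variables (n p q : nat).
Hypotheses (hp1 : 1 < p) (hpq : p < q) (hqn : q <= n).

Lemma monot_y (x : diagram n) : LZ (dmult x) -> NCR (dmult x) ->
  monot p.-1 p (s_act p q x).
Proof.
move=> lz nc u u' v v' /and3P [hu hu' uu] /and3P [hv hv' vv].
have hp0 : 0 < p by lia.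
have F := NCM lz nc.
move: hu hu' hv hv' vv; rewrite !insideE /rank => hu hu' hv hv' vv.
have eu : nat_of_ord u = p.-1 by lia.
have eu' : nat_of_ord u' = p by lia.
case: (posnP (MM (s_act p q x) u v')) => [->|h1]; first by left.
case: (posnP (MM (s_act p q x) u' v)) => [->|h2]; first by right.
exfalso.
have iu' : inside p q u' by rewrite insideE eu'; lia.
have iu : ~~ inside p q u by rewrite insideE eu; lia.
have ru' : nat_of_ord (refl p q u') = q by rewrite (refl_val hp0 hpq hqn iu') eu'; lia.
have memNC1 : forall e, 0 < count (pred1 e) (new_cross p q x) -> e \in new_cross p q x.
  by move=> e; rewrite -has_count has_pred1.
have inI : forall a b, (a,b) \in new_cross p q x -> 0 < cin p q x (refl p q a).
  move=> a b /mem_zip2 [h _]; move: h.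
  change (a \in blocks (fun a => cin p q x (refl p q a)) (us n p q) -> 0 < cin p q x (refl p q a)).
  by rewrite mem_blocks => /andP [].
have inO : forall a b, (a,b) \in new_cross p q x -> 0 < cout p q x b.
  move=> a b /mem_zip2 [_ h]; move: h.
  change (b \in blocks (cout p q x) (outer_order n p q) -> 0 < cout p q x b).
  by rewrite mem_blocks => /andP [].
have cinpos : forall c, 0 < cin p q x c -> exists2 o, ~~ inside p q o & 0 < MM x c o.
  move=> c; rewrite (cinE hp0 hpq hqn) => /sum_pos [o ho h]; exists o => //.
  by rewrite -(mem_outer p q).
have coutpos : forall c, 0 < cout p q x c -> exists2 a, inside p q a & 0 < MM x a c.
  move=> c; rewrite (coutE hp0 hpq hqn) => /sum_pos [a ha h]; exists a => //.
  by rewrite -(mem_us p q).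
move: (ltn_ord v) (ltn_ord v') => ov ov'.
case: (boolP (inside p q v)) => iv.
  have h2' := h2; rewrite (Minside hp0 hpq hqn lz iu' iv) in h2'.
  have rv := refl_val hp0 hpq hqn iv.
  case: (boolP (inside p q v')) => iv'; last first.
    by move: iv iv' vv; rewrite !insideE; case: (ltnP v p.-1); case: (ltnP v' p.-1); lia.
  have rv' := refl_val hp0 hpq hqn iv'.
  rewrite MMsym (Mcross x iv' iu) in h1.
  have [o io ho] := cinpos _ (inI _ _ (memNC1 _ h1)).
  move: iv iv' io; rewrite !insideE => iv iv' io.
  move: (ltn_ord o) vv => oo vv.
  case: (ltnP o p) => ho'.
    apply: (F o (refl p q v') (refl p q v) (refl p q u')); rewrite ?rv ?rv' ?ru';
      try (by move: vv; case: (ltnP v p.-1); case: (ltnP v' p.-1); lia).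
    - by rewrite MMsym.
    - by rewrite MMsym.
  apply: (F (refl p q v) (refl p q u') (refl p q v') o); rewrite ?rv ?rv' ?ru';
    try (by move: vv; case: (ltnP v p.-1); case: (ltnP v' p.-1); lia).
  by rewrite MMsym.
rewrite (Mcross x iu' iv) in h2; have nc2 := memNC1 _ h2.
case: (boolP (inside p q v')) => iv'.
  rewrite MMsym (Mcross x iv' iu) in h1; have nc1 := memNC1 _ h1.
  have := @zip_mono _ _ (fun a b => (a == b) || ltU p q a b)
     (fun a b => (a == b) || ltV p q a b) (new_inner p q x) (outer_ends p q x) u' v v' u
     (eqlt_tr (ltU_tr hp0 hpq hqn)) (@eqlt_refl _ _) (eqlt_tr (ltV_tr hp0 hpq hqn)) (@eqlt_refl _ _)
     (sorted_blocks _ (ltU_tr hp0 hpq hqn) (sorted_us n p q))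
     (sorted_blocks _ (ltV_tr hp0 hpq hqn) (sorted_outer hp0 hpq hqn))
     (size_cross hp0 hpq hqn x) nc2 nc1.
  have nle : ~~ ((v' == u') || ltU p q v' u').
    move: iv'; rewrite /ltU -val_eqE /= eu' insideE => iv'; apply/negP => /orP [/eqP e|/and3P [_ _ h]]; lia.
  move=> /(_ nle); rewrite /ltV /rank -val_eqE /= eu.
  have -> : (p.-1 < p) = true by lia.
  by case/orP => [/eqP e|/and3P [_ _ h]]; lia.
rewrite (Mout hp0 hpq hqn lz iu iv') in h1.
have [a ia ha] := coutpos _ (inO _ _ nc2).
move: iv iv' ia; rewrite !insideE => iv iv' ia.
move: vv; case: (ltnP v p.-1) => c1; case: (ltnP v' p.-1) => c2 vv.
- by apply: (F v' u v a); [lia|lia|lia|rewrite MMsym|rewrite MMsym].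
- by apply: (F v a u v'); [lia|lia|lia|rewrite MMsym|].
- lia.
- by apply: (F u v' a v); lia.
Qed.

End Y.


Lemma swap_act n p q (x : diagram n) (i j : 'I_n.+1) :
  s_act p q (swap_labels i j x) = swap_labels i j (s_act p q x).
Proof.
rewrite /swap_labels /s_act; congr (_, _).
by apply/ffunP => c; rewrite !ffunE.
Qed.

Lemma swap_sym n (x : diagram n) (i j : 'I_n.+1) : i != j ->
  swap_labels i j x = swap_labels j i x.
Proof.
move=> ij; rewrite /swap_labels; congr (_, _); apply/ffunP => c; rewrite !ffunE /=.
case: (eqVneq (dlab x c) i) => [->|ni]; [by rewrite (negbTE ij) | by []].
Qed.

Lemma LZ_act n p q (x : diagram n) : LZ (dmult (s_act p q x)).
Proof. by move=> c d h; rewrite s_multE (negbTE h). Qed.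

Lemma main_lt n (l : 'I_n.+1 -> nat) (x : diagram n) (a b : 'I_n.+1) :
  inX l x -> 0 < a -> (a < b)%N -> l (dlab x a) = l (dlab x b) ->
  exists w, all (valid_gen n) w /\ act_word w x = swap_labels (dlab x a) (dlab x b) x.
Proof.
case=> l0 inj lz nc hval a0 ab lab.
have ij : dlab x a != dlab x b.
  by apply: contraTneq ab => /inj ->; rewrite ltnn.
have bn : (b <= n)%N by rewrite -ltnS ltn_ord.
have vab : valence x a = valence x b by rewrite !hval lab.
case: (eqVneq (nat_of_ord b) a.+1) => adj.
  exists [:: (nat_of_ord a, nat_of_ord b)]; split.
    by rewrite /= /valid_gen /= a0 ab bn.
  rewrite /act_word /=.
  apply: (adj_swap a0 ab bn adj erefl erefl lz (monot_x a0 ab bn lz nc) inj erefl erefl ij).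
  exact: (cin_adj a0 ab bn adj erefl erefl lz vab).
have h1 : (1 < a.+1)%N by lia.
have h2 : (a.+1 < b)%N by lia.
exists [:: (a.+1, nat_of_ord b); (nat_of_ord a, a.+1); (a.+1, nat_of_ord b)]; split.
  by rewrite /= /valid_gen /= a0 h2 bn ltnSn /=; lia.
rewrite /act_word /=.
have hp0 : (0 < a.+1)%N by [].
set y := s_act a.+1 b x.
have ia : ~~ inside a.+1 b a by rewrite insideE; lia.
have ib : inside a.+1 b b by rewrite insideE; lia.
have rb : nat_of_ord (refl a.+1 b b) = a.+1 by rewrite (refl_val hp0 h2 bn ib); lia.
have ya : dlab y a = dlab x a by rewrite s_labE refl_out.
have yb : dlab y (refl a.+1 b b) = dlab x b by rewrite s_labE (reflK hp0 h2 bn).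
have injy : injective (dlab y).
  by move=> c d; rewrite !s_labE => /inj /(refl_inj hp0 h2 bn).
have an : (a.+1 <= n)%N by lia.
have vy : valence y a = valence y (refl a.+1 b b).
  rewrite !(valence_act hp0 h2 bn _ lz) refl_out // (reflK hp0 h2 bn); exact: vab.
have G : s_act a a.+1 y = swap_labels (dlab x a) (dlab x b) y.
  apply: (adj_swap a0 (ltnSn a) an erefl erefl rb (LZ_act _ _ _) (monot_y h1 h2 bn lz nc) injy ya yb ij).
  exact: (cin_adj a0 (ltnSn a) an erefl erefl rb (LZ_act _ _ _) vy).
rewrite G /y -swap_act (act_invol hp0 h2 bn) //.
Qed.

Theorem mainTheorem2 (n : nat) (l : 'I_n.+1 -> nat) (x : diagram n)
    (i j : 'I_n.+1) :
  i != ord0 -> j != ord0 -> i != j -> l i = l j -> inX l x ->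
  exists w : seq (nat * nat),
    all (valid_gen n) w /\ act_word w x = swap_labels i j x.
Proof.
move=> i0 j0 ij lij hx; case: (hx) => l0 inj lz nc hval.
have [g gK Kg] := injF_bij inj.
have pos : forall k, k != ord0 -> (0 < g k)%N.
  move=> k k0; rewrite lt0n; apply: contra k0 => /eqP e.
  have gk : g k = ord0 by apply: val_inj.
  by rewrite -(Kg k) gk l0.
case: (ltngtP (g i) (g j)) => h.
- have e : l (dlab x (g i)) = l (dlab x (g j)) by rewrite !Kg.
  have [w hw] := main_lt hx (pos i i0) h e.
  by exists w; rewrite !Kg in hw.
- have e : l (dlab x (g j)) = l (dlab x (g i)) by rewrite !Kg.
  have [w hw] := main_lt hx (pos j j0) h e.
  by exists w; rewrite !Kg in hw; rewrite swap_sym.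
- by move: ij; rewrite -(Kg i) -(Kg j) (val_inj h) eqxx.
Qed.
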